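(* Let $D_n$, colored towers and bottoms be as in the context. For all integers $n,m,r\ge 0$ there is a bijection $$((\mathcal{T}^s,\mathcal{B}^w),(m,r),D_n)\simeq ((\mathcal{T}^s,\mathcal{T}^w),(m,r),D_{n-r}).$$
   Context: A Dyck path of length $2n$ is a lattice path from $(0,0)$ to $(2n,0)$ with steps $U=(1,1)$ and $D=(1,-1)$ never going below the $x$-axis. An elevated Dyck path is a path $U\bar pD$ with $\bar p$ a Dyck path; $D_n$ denotes the set of elevated Dyck paths of length $2n+2$. For a path $p$ (a word in $U,D$), a tower is an occurrence of a factor $t=U^iD^i$ ($i\ge1$) that cannot be extended to an occurrence of $UtD$; equivalently, each peak $UD$ determines exactly one tower, the maximal $U^iD^i$ centered at it. Towers are colored as follows: Step 1: color every tower whose first step is immediately preceded by a $U$-step; Step 2: color every tower whose first step immediately follows the last step of a tower left uncolored after Step 1; a tower beginning at the first step of $p$ is also colored. $\mathcal{T}(p)$ is the set of colored towers and $\mathcal{T}_2(p)\subseteq\mathcal{T}(p)$ those of height $i\ge2$. The bottom of a tower in $\mathcal{T}_2(p)$ is its first $U$-step. $((\mathcal{T}^s,\mathcal{B}^w),(m,r),D_n)$ is the set of triples $(p,S,R)$ with $p\in D_n$, $S\subseteq\mathcal{T}(p)$, $|S|=m$, $R\subseteq S\cap\mathcal{T}_2(p)$, $|R|=r$ (paths with $m$ colored towers labeled $s$, among which exactly $r$ have their bottom labeled $w$). $((\mathcal{T}^s,\mathcal{T}^w),(m,r),D_n)$ is the set of triples $(p,S,R)$ with $p\in D_n$, $S\subseteq\mathcal{T}(p)$,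 $|S|=m$, $R\subseteq S$, $|R|=r$. $A\simeq B$ means there is a bijection between $A$ and $B$ (both sets empty if the index of $D$ is negative). *)

(* Defs.v *)
From HB Require Import structures.
From mathcomp Require Import all_boot all_order all_algebra.
From mathcomp Require Import finmap.
Set Implicit Arguments. Unset Strict Implicit. Unset Printing Implicit Defensive.



Definition word := seq bool.   (* true = U = (1,1), false = D = (1,-1) *)

Definition isDyck (p : word) : bool :=
  all (fun k => count_mem false (take k p) <= count_mem true (take k p))
      (iota 0 (size p).+1)
  && (count_mem true p == count_mem false p).

Definition elevated (n : nat) (p : word) : Prop :=
  exists q : word, [/\ isDyck q, size q = 2 * n & p = true :: rcons q false].

(* Elevated Dyck paths indexed by an integer; empty for a negative index. *)
Definition elevatedZ (k : int) (p : word) : Prop :=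
  exists n : nat, k = Posz n /\ elevated n p.

(* A tower is represented by a pair (j, i): an occurrence of U^i D^i (i >= 1)
   starting at position j (0-based) of p, which cannot be extended to an
   occurrence of U (U^i D^i) D. *)
Definition tower (p : word) (t : nat * nat) : bool :=
  let: (j, i) := t in
  [&& 0 < i, j + 2 * i <= size p,
      all (fun k => nth false p (j + k) == (k < i)) (iota 0 (2 * i))
    & ~~ [&& 0 < j, nth false p j.-1, j + 2 * i < size p
            & ~~ nth false p (j + 2 * i)]].

Definition step1 (p : word) (t : nat * nat) : bool :=
  (0 < fst t) && nth false p (fst t).-1.

(* Colored towers: Step 1, or Step 2 (first step immediately follows the last
   step of a tower left uncolored after Step 1), or the tower begins at the
   first step of p. *)
Definition colored (p : word) (t : nat * nat) : Prop :=
  tower p t /\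
  [\/ step1 p t,
      (exists t' : nat * nat,
          [/\ tower p t', ~~ step1 p t' & fst t' + 2 * snd t' = fst t])
    | fst t = 0].

Definition height_ge2 (t : nat * nat) : bool := 2 <= snd t.

Definition triple := (word * {fset (nat * nat)} * {fset (nat * nat)})%type.

Definition TsBw (n m r : nat) (x : triple) : Prop :=
  let: (p, Sc, Rw) := x in
  [/\ elevated n p,
      {in Sc, forall t, colored p t},
      #|` Sc|%fset = m,
      (Rw `<=` Sc)%fset
    & {in Rw, forall t, height_ge2 t} /\ #|` Rw|%fset = r].

Definition TsTw (k : int) (m r : nat) (x : triple) : Prop :=
  let: (p, Sc, Rw) := x in
  [/\ elevatedZ k p,
      {in Sc, forall t, colored p t},
      #|` Sc|%fset = m,
      (Rw `<=` Sc)%fset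
    & #|` Rw|%fset = r].

(* Main.v *)
Require Import Defs.
From HB Require Import structures.
From mathcomp Require Import all_boot all_order all_algebra.
From mathcomp Require Import finmap.
From mathcomp Require Import zify.
From Stdlib Require Import ClassicalEpsilon ProofIrrelevance.
Set Implicit Arguments. Unset Strict Implicit. Unset Printing Implicit Defensive.

Lemma towerE p j h : tower p (j,h) <->
  [/\ 0 < h, j + 2*h <= size p,
      (forall k, k < 2*h -> nth false p (j+k) = (k < h)) &
      ~~ [&& 0 < j, nth false p j.-1, j + 2 * h < size p & ~~ nth false p (j + 2 * h)]].
Proof.
rewrite /tower; split.
  case/and4P=> h0 hs /allP ha hn; split=> // k hk.
  by apply/eqP/ha; rewrite mem_iota.
case=> h0 hs ha hn; apply/and4P; split=> //.
by apply/allP=> k; rewrite mem_iota => /andP[_ hk]; apply/eqP/ha.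
Qed.

Lemma tower_pos p t : tower p t -> 0 < t.2.
Proof. by case: t => j h /towerE[]. Qed.

Lemma tower_congr p q j j' h :
  (forall x, x < 2*h -> nth false p (j+x) = nth false q (j'+x)) ->
  (0 < j) && nth false p j.-1 = (0 < j') && nth false q j'.-1 ->
  (j + 2*h < size p) && ~~ nth false p (j+2*h) = (j'+2*h < size q) && ~~ nth false q (j'+2*h) ->
  (j + 2*h <= size p) = (j' + 2*h <= size q) ->
  tower p (j,h) = tower q (j',h).
Proof.
move=> hx h1 h2 h3; rewrite /tower h3.
have -> : all (fun k => nth false p (j + k) == (k < h)) (iota 0 (2 * h)) =
          all (fun k => nth false q (j' + k) == (k < h)) (iota 0 (2 * h)).
  by apply: eq_in_all => k; rewrite mem_iota => /andP[_ hk]; rewrite hx.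
congr [&& _, _, _ & ~~ _].
by rewrite !andbA h1 -!andbA h2.
Qed.

Lemma tower_overlap p j1 h1 j2 h2 : tower p (j1,h1) -> tower p (j2,h2) ->
  j1 < j2 + 2*h2 -> j2 < j1 + 2*h1 -> j1 = j2 /\ h1 = h2.
Proof.
move=> /towerE[p1 s1 a1 n1] /towerE[p2 s2 a2 n2] o1 o2.
have key : forall ja ha jb hb, 0 < ha -> 0 < hb ->
   (forall k, k < 2*ha -> nth false p (ja+k) = (k < ha)) ->
   (forall k, k < 2*hb -> nth false p (jb+k) = (k < hb)) ->
   ja < jb + 2*hb -> jb < ja + 2*ha -> ja + ha <= jb + hb.
  move=> ja ha jb hb pa pb aa ab oa ob; rewrite leqNgt; apply/negP => lt.
  case: (leqP ja (jb+hb)) => c.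
    (* jb+hb = ja + (jb+hb-ja), index < ha so true, but ab says false *)
    have e1 := aa (jb + hb - ja) ltac:(lia).
    have e2 := ab hb ltac:(lia).
    rewrite (_ : ja + (jb + hb - ja) = jb + hb) in e1; last by lia.
    rewrite e1 ltnn in e2; move: e2; case: ltnP => //; lia.
  have e1 := ab (ja - jb) ltac:(lia).
  have e2 := aa 0 ltac:(lia).
  rewrite addn0 in e2; rewrite (_ : jb + (ja - jb) = ja) in e1; last by lia.
  by rewrite e2 in e1; move: e1; case: ltnP => //; lia.
have c1 := key _ _ _ _ p1 p2 a1 a2 o1 o2.
have c2 := key _ _ _ _ p2 p1 a2 a1 o2 o1.
have hh : h1 = h2.
  have ext : forall ja ha jb hb, 0 < ha ->
   (forall k, k < 2*hb -> nth false p (jb+k) = (k < hb)) ->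
   jb + 2*hb <= size p -> ja + ha = jb + hb -> ha < hb ->
   [&& 0 < ja, nth false p ja.-1, ja + 2 * ha < size p & ~~ nth false p (ja + 2 * ha)].
    move=> ja ha jb hb pa ab sb e lt.
    have e1 := ab (ja.-1 - jb) ltac:(lia).
    have e2 := ab (ja + 2*ha - jb) ltac:(lia).
    rewrite (_ : jb + (ja.-1 - jb) = ja.-1) in e1; last by lia.
    rewrite (_ : jb + (ja + 2*ha - jb) = ja + 2*ha) in e2; last by lia.
    rewrite e1 e2; apply/and4P; split; try lia.
  case: (ltngtP h1 h2) => // lt.
    by move: n1; rewrite (ext j1 h1 j2 h2 p1 a2 s2 ltac:(lia) lt).
  by move: n2; rewrite (ext j2 h2 j1 h1 p2 a1 s1 ltac:(lia) lt).
split=> //; lia.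
Qed.
Ltac bl := first [lia | apply/andP; split; lia | match goal with H : size _ = _ |- _ => move: H => /=; lia end].

Notation cT w := (count_mem true w).
Notation cF w := (count_mem false w).

Lemma eqTF : (true == false) = false. Proof. by []. Qed.
Lemma eqFT : (false == true) = false. Proof. by []. Qed.

Lemma cntT_cons b s : cT (b :: s) = b + cT s. Proof. by case: b. Qed.
Lemma cntF_cons b s : cF (b :: s) = ~~ b + cF s. Proof. by case: b. Qed.
Lemma take_cat_le (T : Type) k (s t : seq T) : k <= size s -> take k (s ++ t) = take k s.
Proof.
move=> h; rewrite take_cat; case: ltnP => // h2.
rewrite (_ : k - size s = 0) ?take0 ?cats0 ?take_oversize //; lia.
Qed.

Lemma b2nT : nat_of_bool true = 1. Proof. by []. Qed.
Lemma b2nF : nat_of_bool false = 0. Proof. by []. Qed.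
Lemma nT : (~~ true) = false. Proof. by []. Qed.
Lemma nF : (~~ false) = true. Proof. by []. Qed.
Lemma cnt_nil : (cT [::] = 0) * (cF [::] = 0). Proof. by []. Qed.

Definition blk (i : nat) : word := nseq i true ++ nseq i false.

Lemma size_blk i : size (blk i) = 2 * i.
Proof. by rewrite /blk size_cat !size_nseq; lia. Qed.

Lemma nth_blk i k : nth false (blk i) k = (k < i).
Proof.
rewrite /blk nth_cat size_nseq nth_nseq; case: ltnP => // h.
by rewrite nth_nseq if_same.
Qed.


Lemma blk_cnt i : cT (blk i) = i /\ cF (blk i) = i.
Proof. by rewrite /blk !count_cat !count_nseq /=; lia. Qed.

Lemma blk_prefix i l : 0 < l < 2 * i -> cF (take l (blk i)) < cT (take l (blk i)).
Proof.
move=> /andP[l0 li]; rewrite /blk take_cat size_nseq.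
case: (ltnP l i) => h.
  by rewrite take_nseq ?count_nseq /=; lia.
rewrite take_nseq; last by lia.
by rewrite !count_cat !count_nseq /=; lia.
Qed.

Definition Pos (w : word) := forall k, 0 < k < size w -> cF (take k w) < cT (take k w).

Lemma take_acb (a c b : word) k : take k (a ++ c ++ b) =
  if k < size a then take k a else if k < size a + size c then a ++ take (k - size a) c
  else a ++ c ++ take (k - size a - size c) b.
Proof.
rewrite take_cat; case: ltnP => // h1.
rewrite take_cat; case: ltnP => h2; case: ltnP => h3 //; try lia.
Qed.

Lemma Pos_blk a b i : 0 < i -> Pos (a ++ blk i ++ b) <-> Pos (a ++ blk i.+1 ++ b).
Proof.
move=> i0; have [sb1 sb2] := (size_blk i, size_blk i.+1).
have [t1 f1] := blk_cnt i; have [t2 f2] := blk_cnt i.+1.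
have Sz : forall c, size (a ++ c ++ b) = size a + size c + size b.
  by move=> c; rewrite !size_cat; lia.
have HA : forall c, 0 < size c -> Pos (a ++ c ++ b) -> cF a <= cT a.
  move=> c c0 H; case: (posnP (size a)) => [/size0nil -> //|sa].
  have := H (size a); rewrite Sz take_acb ltnn ifT; last by lia.
  rewrite subnn take0 cats0 => h; have := h ltac:(lia); lia.
split=> H k; rewrite Sz => /andP[k0 kl]; rewrite take_acb.
- have Ha := HA (blk i) ltac:(rewrite sb1; lia) H.
  case: (ltnP k (size a)) => h1.
    by have := H k; rewrite Sz take_acb h1; apply; lia.
  case: (ltnP k (size a + size (blk i.+1))) => h2.
    case: (posnP (k - size a)) => l0.
      rewrite l0 take0 cats0.
      have := H (size a); rewrite Sz take_acb ltnn ifT; last by lia.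
      by rewrite subnn take0 cats0; apply; lia.
    rewrite !count_cat; have := blk_prefix (l:=k - size a) (i:=i.+1); rewrite sb2 in h2.
    move=> hp; have := hp ltac:(bl); lia.
  have := H (k - 2); rewrite Sz take_acb ifF; last by lia.
  rewrite ifF; last by lia.
  rewrite !count_cat sb1; rewrite sb2 in h2 *; rewrite !count_nseq /=.
  rewrite (_ : k - 2 - size a - 2 * i = k - size a - 2 * i.+1); last by lia.
  move=> hh; have := hh ltac:(bl); lia.
- have Ha := HA (blk i.+1) ltac:(rewrite sb2; lia) H.
  case: (ltnP k (size a)) => h1.
    by have := H k; rewrite Sz take_acb h1; apply; lia.
  case: (ltnP k (size a + size (blk i))) => h2.
    case: (posnP (k - size a)) => l0.
      rewrite l0 take0 cats0.
      have := H (size a); rewrite Sz take_acb ltnn ifT; last by lia.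
      by rewrite subnn take0 cats0; apply; lia.
    rewrite !count_cat; have := blk_prefix (l:=k - size a) (i:=i); rewrite sb1 in h2.
    move=> hp; have := hp ltac:(bl); lia.
  have := H (k + 2); rewrite Sz take_acb ifF; last by lia.
  rewrite ifF; last by lia.
  rewrite !count_cat sb2; rewrite sb1 in h2 *; rewrite !count_nseq /=.
  rewrite (_ : k + 2 - size a - 2 * i.+1 = k - size a - 2 * i); last by lia.
  move=> hh; have := hh ltac:(bl); lia.
Qed.

Lemma elevatedE n p : elevated n p <-> [/\ size p = 2 * n + 2, cT p = cF p & Pos p].
Proof.
split.
  case=> q [/andP[/allP hd /eqP hc] sq ->]; split.
  - by rewrite /= size_rcons sq; lia.
  - by rewrite /= -cats1 !count_cat /= hc !addn0 add0n addnC.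
  move=> k; rewrite /= size_rcons; case: k => // k /andP[_ kl].
  rewrite /= -cats1.
  have -> : take k (q ++ [:: false]) = take k q.
    rewrite take_cat; case: ltnP => // hk.
    rewrite (_ : k - size q = 0) ?take0 ?cats0 ?take_oversize //; lia.
  have := hd k; rewrite mem_iota; move=> h; have := h ltac:(bl).
  rewrite /= ?add0n ?add1n; lia.
case=> sp hc hp.
case: p sp hc hp => [|x p1] sp hc hp; first by move: sp => /=; lia.
have hx : x = true.
  have := hp 1; rewrite /= take0 => h; have := h ltac:(move: sp => /=; lia).
  by case: x {h sp hc hp}.
subst x.
case/lastP: p1 sp hc hp => [|q y] sp hc hp; first by move: sp => /=; lia.
have hq : cF q < cT q + 1.
  have := hp (size q).+1; rewrite -cats1 -cat_cons take_size_cat //.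
  rewrite cntT_cons cntF_cons size_cat => h; have := h ltac:(move: sp; rewrite /= size_rcons; bl).
  by lia.
have hy : y = false.
  move: hc; rewrite cntT_cons cntF_cons -cats1 !count_cat !cntT_cons !cntF_cons !cnt_nil.
  by case: y {sp hp} => // hh; exfalso; move: hh; rewrite ?b2nT ?b2nF ?nT ?nF; lia.
subst y; exists q; split => //.
- apply/andP; split.
    apply/allP => k; rewrite mem_iota => /andP[_ kq].
    have := hp k.+1; rewrite [take _ _]/= -cats1 take_cat_le; last by lia.
    rewrite cntT_cons cntF_cons => h; have := h ltac:(move: sp; rewrite /= size_cat /=; bl).
    by lia.
  move: hc; rewrite cntT_cons cntF_cons -cats1 !count_cat !cntT_cons !cntF_cons !cnt_nil.
  by rewrite ?b2nT ?b2nF ?nT ?nF => hh; apply/eqP; lia.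
- by move: sp; rewrite /= size_rcons; lia.
Qed.


Lemma nth_acb (a c b : word) x : nth false (a ++ c ++ b) x =
  if x < size a then nth false a x else if x < size a + size c then nth false c (x - size a)
  else nth false b (x - size a - size c).
Proof.
rewrite nth_cat; case: ltnP => // h1; rewrite nth_cat.
case: ltnP => h2; case: ltnP => h3 //; try lia.
Qed.

Lemma tower_blk a b h : tower (a ++ blk h ++ b) (size a, h) =
  (0 < h) && ~~ [&& 0 < size a, nth false a (size a).-1, 0 < size b & ~~ nth false b 0].
Proof.
set w := a ++ blk h ++ b.
have Ew : size w = size a + 2*h + size b by rewrite /w !size_cat ?size_blk ?size_nseq; lia.
have E1 : 0 < size a -> nth false w (size a).-1 = nth false a (size a).-1.
  by move=> sa; rewrite /w nth_acb ifT //; lia.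
have E2 : nth false w (size a + 2*h) = nth false b 0.
  rewrite /w nth_acb ifF; last by lia.
  by rewrite ifF ?size_blk; [congr nth; lia | lia].
have E3 : forall k, k < 2*h -> nth false w (size a + k) = (k < h).
  move=> k hk; rewrite /w nth_acb ifF; last by lia.
  rewrite ifT ?size_blk ?nth_blk; [congr (_ < _); lia | lia].
have Ec : [&& 0 < size a, nth false w (size a).-1, size a + 2*h < size w & ~~ nth false w (size a + 2*h)]
   = [&& 0 < size a, nth false a (size a).-1, 0 < size b & ~~ nth false b 0].
  case: (posnP (size a)) => [->//|sa]; rewrite /= E1 // E2 Ew.
  by rewrite -{1}(addn0 (size a + 2*h)) ltn_add2l.
apply/idP/idP.
  by move/towerE=> [h0 _ _ hn]; rewrite h0; move: hn; rewrite Ec.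
move/andP=> [h0 hn]; apply/towerE; split => //.
- by rewrite Ew; lia.
- by rewrite Ec.
Qed.

Section Low.
Variables (a b : word) (i : nat).
Hypothesis i0 : 0 < i.
Local Notation j := (size a).
Local Notation p := (a ++ blk i.+1 ++ b).
Local Notation q := (a ++ blk i ++ b).

Lemma sz_p : size p = j + 2 * i.+1 + size b.
Proof. by rewrite !size_cat ?size_blk ?size_nseq; lia. Qed.
Lemma sz_q : size q = j + 2 * i + size b.
Proof. by rewrite /q !size_cat ?size_blk ?size_nseq; lia. Qed.

Lemma nth_lo x : x <= j -> nth false p x = nth false q x.
Proof.
move=> hx; rewrite !nth_acb !size_blk.
case: (ltnP x (size a)) => // h.
case: (ltnP x (size a + 2 * i.+1)) => h1; last lia.
case: (ltnP x (size a + 2 * i)) => h2; last lia.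
rewrite !nth_blk (_ : x - size a = 0) //; lia.
Qed.

Lemma nth_hi x : j + 2 * i <= x.+1 -> nth false q x = nth false p x.+2.
Proof.
move=> hx; rewrite !nth_acb !size_blk.
case: (ltnP x (size a)) => h0; first lia.
case: (ltnP x.+2 (size a)) => h0'; first lia.
case: (ltnP x (size a + 2*i)) => h1; case: (ltnP x.+2 (size a + 2*i.+1)) => h2.
- by rewrite !nth_blk; apply/idP/idP => hh; exfalso; lia.
- exfalso; lia.
- exfalso; lia.
- congr nth; lia.
Qed.

Lemma mid_tower : tower p (j, i.+1) = tower q (j, i).
Proof. by rewrite !tower_blk i0. Qed.

Lemma towerL j' h : j' + 2 * h <= size a -> tower p (j', h) = tower q (j', h).
Proof.
move=> hj; apply: tower_congr.
- by move=> x hx; apply: nth_lo; lia.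
- by case: j' hj => //= j' hj; rewrite nth_lo //; lia.
- rewrite nth_lo ?sz_p ?sz_q //; congr (_ && _); lia.
- rewrite sz_p sz_q; lia.
Qed.

Lemma towerR j' h : size a + 2 * i <= j' -> tower q (j', h) = tower p (j'.+2, h).
Proof.
move=> hj; apply: tower_congr.
- by move=> x hx; rewrite nth_hi; [congr nth; lia | lia].
- have -> : 0 < j' by lia.
  by rewrite /= nth_hi; [congr nth; lia | lia].
- rewrite nth_hi ?sz_p ?sz_q; last by lia.
  rewrite (_ : (j' + 2 * h).+2 = j'.+2 + 2 * h); last by lia.
  congr (_ && _); lia.
- rewrite sz_p sz_q; lia.
Qed.

End Low.


Definition phi j (t : nat * nat) : nat * nat :=
  if t.1 < j then t else if t.1 == j then (j, t.2.-1) else (t.1 - 2, t.2).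
Definition psi j (t : nat * nat) : nat * nat :=
  if t.1 < j then t else if t.1 == j then (j, t.2.+1) else (t.1.+2, t.2).

Lemma phi_lt j t : t.1 < j -> phi j t = t. Proof. by rewrite /phi => ->. Qed.
Lemma psi_lt j t : t.1 < j -> psi j t = t. Proof. by rewrite /psi => ->. Qed.
Lemma phi_eq j h : phi j (j, h) = (j, h.-1). Proof. by rewrite /phi /= ltnn eqxx. Qed.
Lemma psi_eq j h : psi j (j, h) = (j, h.+1). Proof. by rewrite /psi /= ltnn eqxx. Qed.
Lemma phi_gt j t : j < t.1 -> phi j t = (t.1 - 2, t.2).
Proof. by rewrite /phi => h; rewrite ltnNge ltnW //= gtn_eqF. Qed.
Lemma psi_gt j t : j < t.1 -> psi j t = (t.1.+2, t.2).
Proof. by rewrite /psi => h; rewrite ltnNge ltnW //= gtn_eqF. Qed.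

Definition psi1 j k := if k <= j then k else k.+2.
Lemma psi1_inj j : injective (psi1 j).
Proof. by move=> x y; rewrite /psi1; case: (leqP x j); case: (leqP y j); lia. Qed.
Lemma psi_fst j t : (psi j t).1 = psi1 j t.1.
Proof.
case: t => x h; rewrite /psi /psi1 /=.
case: (ltngtP x j) => hh /=.
- by [].
- by [].
- by rewrite hh.
Qed.

Section Corr.
Variables (a b : word) (i : nat).
Hypothesis i0 : 0 < i.
Local Notation j := (size a).
Local Notation p := (a ++ blk i.+1 ++ b).
Local Notation q := (a ++ blk i ++ b).
Hypothesis Tp : tower p (j, i.+1).

Lemma Tq : tower q (j, i).
Proof. by rewrite -mid_tower. Qed.

Lemma classify_p t : tower p t -> [\/ t = (j, i.+1), t.1 + 2 * t.2 <= j | j + 2 * i.+1 <= t.1].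
Proof.
case: t => j' h Ht /=.
case: (leqP (j + 2 * i.+1) j') => h1; first by constructor 3.
case: (leqP (j' + 2 * h) j) => h2; first by constructor 2.
by have [-> ->] := tower_overlap Ht Tp h1 h2; constructor 1.
Qed.

Lemma classify_q t : tower q t -> [\/ t = (j, i), t.1 + 2 * t.2 <= j | j + 2 * i <= t.1].
Proof.
case: t => j' h Ht /=.
case: (leqP (j + 2 * i) j') => h1; first by constructor 3.
case: (leqP (j' + 2 * h) j) => h2; first by constructor 2.
by have [-> ->] := tower_overlap Ht Tq h1 h2; constructor 1.
Qed.

Lemma corr_p t : tower p t -> tower q (phi j t) /\ psi j (phi j t) = t.
Proof.
move=> Ht; have hp := tower_pos Ht.
case: (classify_p Ht) => [->|h|h].
- by rewrite phi_eq psi_eq; split => //; apply: Tq.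
- case: t Ht hp h => jj hh Ht /= hp h.
  rewrite phi_lt; last by rewrite /=; lia.
  rewrite psi_lt; last by rewrite /=; lia.
  by rewrite -(towerL b i0 h); split.
- case: t Ht hp h => jj hh Ht /= hp h.
  rewrite phi_gt; last by rewrite /=; lia.
  rewrite psi_gt; last by rewrite /=; lia.
  have e : (jj - 2).+2 = jj by lia.
  rewrite (towerR b i0 _ (_ : size a + 2 * i <= jj - 2)) ?e; last by lia.
  by split.
Qed.

Lemma corr_q t : tower q t -> tower p (psi j t) /\ phi j (psi j t) = t.
Proof.
move=> Ht; have hp := tower_pos Ht.
case: (classify_q Ht) => [->|h|h].
- by rewrite psi_eq phi_eq; split => //; rewrite mid_tower.
- case: t Ht hp h => jj hh Ht /= hp h.
  rewrite psi_lt; last by rewrite /=; lia.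
  rewrite phi_lt; last by rewrite /=; lia.
  by rewrite (towerL b i0 h); split.
- case: t Ht hp h => jj hh Ht /= hp h.
  rewrite psi_gt; last by rewrite /=; lia.
  rewrite phi_gt; last by rewrite /=; lia.
  rewrite -(towerR b i0 _ h); split => //.
  by rewrite (_ : jj.+2 - 2 = jj) //; lia.
Qed.

Lemma step1_corr t : tower q t -> step1 q t = step1 p (psi j t).
Proof.
move=> Ht; have hp := tower_pos Ht.
case: (classify_q Ht) => [->|h|h].
- rewrite psi_eq /step1 /=; case: (posnP j) => // hj.
  by rewrite nth_lo //; lia.
- rewrite psi_lt /=; last by lia.
  rewrite /step1; case: (posnP t.1) => // h0 /=.
  by rewrite nth_lo //; lia.
- rewrite psi_gt /=; last by lia.
  rewrite /step1 /=; have -> : 0 < t.1 by lia.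
  by rewrite /= (nth_hi b i0); [congr nth; lia | lia].
Qed.

Lemma end_corr u : tower q u -> (psi j u).1 + 2 * (psi j u).2 = psi1 j (u.1 + 2 * u.2).
Proof.
move=> Ht; have hp := tower_pos Ht.
case: (classify_q Ht) => [->|h|h].
- by rewrite psi_eq /psi1 /=; case: leqP; lia.
- by rewrite psi_lt /psi1 /=; [rewrite h | lia].
- by rewrite psi_gt /psi1 /=; [case: leqP; lia | lia].
Qed.

Lemma colored_corr t : tower q t -> colored q t <-> colored p (psi j t).
Proof.
move=> Ht; have [Ht' _] := corr_q Ht.
rewrite /colored; split; case=> _ H; split=> //.
  case: H => [s1|[u [Hu s1 he]]|z].
  - by constructor 1; rewrite -step1_corr.
  - constructor 2; exists (psi j u); have [Hu' _] := corr_q Hu.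
    split=> //; first by rewrite -step1_corr.
    by rewrite end_corr // he psi_fst.
  - by constructor 3; rewrite psi_fst /psi1 z.
case: H => [s1|[u [Hu s1 he]]|z].
- by constructor 1; rewrite step1_corr.
- constructor 2; have [Hu' Hpu] := corr_p Hu; exists (phi j u).
  split=> //; first by rewrite step1_corr // Hpu.
  apply: (@psi1_inj j); rewrite -end_corr // -psi_fst Hpu; done.
- constructor 3; move: z; rewrite psi_fst /psi1; case: leqP => //.
Qed.

End Corr.


Local Open Scope fset_scope.

Section FS.
Variables (T : choiceType).
Implicit Types (A B : {fset T}) (f g : T -> T).

Lemma img_card f A : {in A &, injective f} -> #|` f @` A| = #|` A|.
Proof. by move=> h; rewrite card_in_imfset. Qed.

Lemma img_mem f A x : x \in A -> f x \in f @` A.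
Proof. by move=> h; apply: in_imfset. Qed.

Lemma img_memP f A y : reflect (exists2 x, x \in A & y = f x) (y \in f @` A).
Proof. exact: imfsetP. Qed.

Lemma img_can f g A : {in A, cancel f g} -> g @` (f @` A) = A.
Proof.
move=> h; apply/fsetP => x; apply/imfsetP/idP.
  by case=> y /imfsetP[z zA ->] ->; rewrite h.
by move=> xA; exists (f x); [apply: in_imfset | rewrite h].
Qed.

Lemma img_sub f A B : A `<=` B -> f @` A `<=` f @` B.
Proof.
move/fsubsetP=> h; apply/fsubsetP => y /imfsetP[x xA ->].
by apply: in_imfset; apply: h.
Qed.

End FS.


Definition iso (A B : Type) := exists f : A -> B, bijective f.

Lemma iso_refl A : iso A A.
Proof. by exists id; exists id. Qed.

Lemma iso_sym A B : iso A B -> iso B A.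
Proof. by case=> f [g fg gf]; exists g; exists f. Qed.

Lemma iso_trans A B C : iso A B -> iso B C -> iso A C.
Proof. by case=> f bf [g bg]; exists (g \o f); apply: bij_comp. Qed.

Lemma iso_empty A B : (A -> False) -> (B -> False) -> iso A B.
Proof.
move=> ha hb; exists (fun a => False_rect B (ha a)).
by exists (fun b => False_rect A (hb b)) => x; [case: (ha x) | case: (hb x)].
Qed.

Lemma sig_eq X (P : X -> Prop) (x y : {a | P a}) : sval x = sval y -> x = y.
Proof.
case: x y => [x px] [y py] /= e; subst y.
by rewrite (proof_irrelevance _ px py).
Qed.

Lemma rel_iso A B (Rl : A -> B -> Prop) :
  (forall a, exists b, Rl a b) -> (forall b, exists a, Rl a b) ->
  (forall a b1 b2, Rl a b1 -> Rl a b2 -> b1 = b2) ->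
  (forall a1 a2 b, Rl a1 b -> Rl a2 b -> a1 = a2) -> iso A B.
Proof.
move=> t1 t2 fu inj.
pose f a := proj1_sig (constructive_indefinite_description _ (t1 a)).
pose g b := proj1_sig (constructive_indefinite_description _ (t2 b)).
have hf a : Rl a (f a) := proj2_sig (constructive_indefinite_description _ (t1 a)).
have hg b : Rl (g b) b := proj2_sig (constructive_indefinite_description _ (t2 b)).
exists f; exists g => x.
- exact: (inj _ _ _ (hg (f x)) (hf x)).
- exact: (fu _ _ _ (hf (g x)) (hg x)).
Qed.

Lemma sig_rel_iso X Y (P : X -> Prop) (Q : Y -> Prop) (Rel : X -> Y -> Prop) :
  (forall x, P x -> exists y, Q y /\ Rel x y) ->
  (forall y, Q y -> exists x, P x /\ Rel x y) ->
  (forall x y1 y2, P x -> Q y1 -> Q y2 -> Rel x y1 -> Rel x y2 -> y1 = y2) ->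
  (forall x1 x2 y, P x1 -> P x2 -> Q y -> Rel x1 y -> Rel x2 y -> x1 = x2) ->
  iso {x | P x} {y | Q y}.
Proof.
move=> t1 t2 fu inj.
apply: (@rel_iso _ _ (fun a b => Rel (sval a) (sval b))).
- case=> x px; have [y [qy r]] := t1 x px; by exists (exist _ y qy).
- case=> y qy; have [x [px r]] := t2 y qy; by exists (exist _ x px).
- move=> [x px] [y1 q1] [y2 q2] /= r1 r2; apply: sig_eq => /=; exact: fu r1 r2.
- move=> [x1 p1] [x2 p2] [y q] /= r1 r2; apply: sig_eq => /=; exact: inj r1 r2.
Qed.


Local Open Scope fset_scope.

Lemma seq_max (s : seq (nat * nat)) : s != [::] ->
  exists2 w, w \in s & forall u, u \in s -> (u.1 <= w.1)%N.
Proof.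
elim: s => // x s IH _.
case: (eqVneq s [::]) => [->|hs].
  by exists x; rewrite ?inE // => u; rewrite inE => /eqP ->.
have [w ws hw] := IH hs.
case: (leqP x.1 w.1) => h.
  exists w; first by rewrite inE ws orbT.
  by move=> u; rewrite inE => /orP[/eqP ->|/hw].
exists x; first by rewrite inE eqxx.
move=> u; rewrite inE => /orP[/eqP -> //|/hw hu]; exact: (leq_trans hu (ltnW h)).
Qed.

Lemma seq_min (s : seq (nat * nat)) : s != [::] ->
  exists2 w, w \in s & forall u, u \in s -> (w.1 <= u.1)%N.
Proof.
elim: s => // x s IH _.
case: (eqVneq s [::]) => [->|hs].
  by exists x; rewrite ?inE // => u; rewrite inE => /eqP ->.
have [w ws hw] := IH hs.
case: (leqP w.1 x.1) => h.
  exists w; first by rewrite inE ws orbT.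
  by move=> u; rewrite inE => /orP[/eqP ->|/hw].
exists x; first by rewrite inE eqxx.
move=> u; rewrite inE => /orP[/eqP -> //|/hw hu]; exact: (leq_trans (ltnW h) hu).
Qed.

Lemma fset_ne (A : {fset (nat * nat)}) : A != fset0 -> enum_fset A != [::].
Proof.
case/fset0Pn => x xA; apply/eqP => e.
by move: xA; rewrite -[x \in A]/(x \in enum_fset A) e.
Qed.

Lemma fset_max (A : {fset (nat * nat)}) : A != fset0 ->
  exists2 w, w \in A & forall u, u \in A -> (u.1 <= w.1)%N.
Proof. by move/fset_ne/seq_max. Qed.

Lemma fset_min (A : {fset (nat * nat)}) : A != fset0 ->
  exists2 w, w \in A & forall u, u \in A -> (w.1 <= u.1)%N.
Proof. by move/fset_ne/seq_min. Qed.

Lemma same_start w t1 t2 : tower w t1 -> tower w t2 -> t1.1 = t2.1 -> t1 = t2.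
Proof.
case: t1 => j1 h1; case: t2 => j2 h2 T1 T2 /= e.
have p1 := tower_pos T1; have p2 := tower_pos T2.
have [-> ->] := tower_overlap T1 T2 ltac:(simpl in *; lia) ltac:(simpl in *; lia).
by [].
Qed.

Lemma decomp w j h : tower w (j, h) ->
  w = take j w ++ blk h ++ drop (j + 2 * h) w /\ size (take j w) = j.
Proof.
move/towerE=> [h0 hs ha _]; split; last by rewrite size_takel //; lia.
rewrite -{1}(cat_take_drop j w); congr cat.
rewrite -{1}(cat_take_drop (2 * h) (drop j w)) drop_drop addnC; congr cat.
apply: (@eq_from_nth _ false).
  by rewrite size_takel ?size_blk // size_drop; lia.
move=> k; rewrite size_takel ?size_drop; last by lia.
move=> hk; rewrite nth_take // nth_drop ha // nth_blk //.
Qed.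

Lemma take_a (a c : word) : take (size a) (a ++ c) = a.
Proof. exact: take_size_cat. Qed.
Lemma drop_a (a c : word) : drop (size a) (a ++ c) = c.
Proof. by rewrite drop_size_cat. Qed.

Lemma psi1_lt j x y : (psi1 j x < psi1 j y) = (x < y).
Proof. by rewrite /psi1; case: (leqP x j); case: (leqP y j) => h1 h2; apply/idP/idP; lia. Qed.

Lemma psi_mono j t1 t2 : t1.1 < t2.1 -> (psi j t1).1 < (psi j t2).1.
Proof. by rewrite !psi_fst psi1_lt. Qed.

Lemma psi_ht j t : t.2 <= (psi j t).2.
Proof. by rewrite /psi; case: ltnP => //= _; case: eqP. Qed.

Section Aux.
Variables (a b : word) (i : nat).
Hypothesis i0 : 0 < i.
Local Notation j := (size a).
Local Notation p := (a ++ blk i.+1 ++ b).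
Local Notation q := (a ++ blk i ++ b).
Hypothesis Tp : tower p (j, i.+1).

Lemma phi_inj (F : {fset nat * nat}) : {in F, forall t, tower p t} -> {in F &, injective (phi j)}.
Proof.
move=> hF x y hx hy e.
by rewrite -(corr_p i0 Tp (hF x hx)).2 e (corr_p i0 Tp (hF y hy)).2.
Qed.

Lemma psi_inj (F : {fset nat * nat}) : {in F, forall t, tower q t} -> {in F &, injective (psi j)}.
Proof.
move=> hF x y hx hy e.
by rewrite -(corr_q i0 Tp (hF x hx)).2 e (corr_q i0 Tp (hF y hy)).2.
Qed.

Lemma psiphi (F : {fset nat * nat}) : {in F, forall t, tower p t} -> psi j @` (phi j @` F) = F.
Proof. by move=> hF; apply: img_can => x hx; exact: (corr_p i0 Tp (hF x hx)).2. Qed.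

Lemma phipsi (F : {fset nat * nat}) : {in F, forall t, tower q t} -> phi j @` (psi j @` F) = F.
Proof. by move=> hF; apply: img_can => x hx; exact: (corr_q i0 Tp (hF x hx)).2. Qed.

Lemma colored_phi t : tower p t -> colored p t <-> colored q (phi j t).
Proof.
move=> Ht; have [Hq e] := corr_p i0 Tp Ht.
by rewrite (colored_corr i0 Tp Hq) e.
Qed.

Lemma colored_psi t : tower q t -> colored q t <-> colored p (psi j t).
Proof. by move=> Ht; apply: (colored_corr i0 Tp Ht). Qed.

Lemma phi_mono t1 t2 : tower p t1 -> tower p t2 -> t1.1 < t2.1 -> (phi j t1).1 < (phi j t2).1.
Proof.
move=> T1 T2; rewrite -{1}(corr_p i0 Tp T1).2 -{1}(corr_p i0 Tp T2).2.
by rewrite !psi_fst psi1_lt.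
Qed.

Lemma phi_ht t : tower p t -> t <> (j, i.+1) -> (phi j t).2 = t.2.
Proof.
move=> Ht ne; case: (ltngtP t.1 j) => h.
- by rewrite phi_lt.
- by rewrite phi_gt.
- by case: ne; apply: same_start Ht Tp _.
Qed.

Lemma elev_corr n : elevated n.+1 p <-> elevated n q.
Proof.
have [t1 f1] := blk_cnt i; have [t2 f2] := blk_cnt i.+1.
rewrite !elevatedE; have PB := Pos_blk a b i0.
have e1 : size p = (size a + 2 * i.+1 + size b)%N by rewrite size_cat (size_cat (blk _)) size_blk; lia.
have e2 : size q = (size a + 2 * i + size b)%N by rewrite size_cat (size_cat (blk _)) size_blk; lia.
have e3 : cT p = (cT a + i.+1 + cT b)%N by rewrite count_cat (count_cat _ (blk _)) t2 addnA.
have e4 : cF p = (cF a + i.+1 + cF b)%N by rewrite count_cat (count_cat _ (blk _)) f2 addnA.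
have e5 : cT q = (cT a + i + cT b)%N by rewrite count_cat (count_cat _ (blk _)) t1 addnA.
have e6 : cF q = (cF a + i + cF b)%N by rewrite count_cat (count_cat _ (blk _)) f1 addnA.
rewrite e1 e2 e3 e4 e5 e6.
split; case=> h1 h2 h3; split; try lia; by apply/PB.
Qed.

End Aux.


Local Open Scope fset_scope.

Definition quad := (word * {fset (nat*nat)} * {fset (nat*nat)} * {fset (nat*nat)})%type.

Definition Y (n m r k : nat) (x : quad) : Prop :=
  let: (p, Sc, R, W) := x in
  [/\ elevated n p, {in Sc, forall t, colored p t}, #|` Sc| = m, R `<=` Sc & #|` R| = r] /\
  [/\ W `<=` R, #|` W| = k, {in W, forall t, height_ge2 t}
    & {in W, forall w, {in R, forall z, z \notin W -> (w.1 < z.1)%N}}].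

Definition Rel (x y : quad) : Prop :=
  let: (p, Sc, R, W) := x in let: (q, Sc', R', W') := y in
  exists a b i, [/\ (0 < i)%N, p = a ++ blk i.+1 ++ b, q = a ++ blk i ++ b,
     (size a, i.+1) \in W & {in W, forall u, (u.1 <= size a)%N}] /\
   [/\ Sc' = phi (size a) @` Sc, R' = phi (size a) @` R & W' = phi (size a) @` (W `\ (size a, i.+1))].

Lemma decomp' w j h : tower w (j, h) -> exists a b, w = a ++ blk h ++ b /\ size a = j.
Proof. by move/decomp => [e s]; exists (take j w), (drop (j + 2 * h) w). Qed.

Lemma step_fwd n m r k x : Y n.+1 m r k.+1 x -> exists y, Y n m r k y /\ Rel x y.
Proof.
case: x => [[[p Sc] R] W] [[Ep CS cS RS cR] [WR cW HW OW]].
have hS : {in Sc, forall t, tower p t} by move=> t h; exact: (CS t h).1.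
have hR : {in R, forall t, tower p t} by move=> t h; apply hS; exact: (fsubsetP RS).
have hW : {in W, forall t, tower p t} by move=> t h; apply hR; exact: (fsubsetP WR).
have Wne : W != fset0 by apply/eqP => e; move: cW; rewrite e cardfs0.
have [w wW wmax] := fset_max Wne.
case: w wW wmax => jw hw wW wmax.
have Tw := hW _ wW.
have h2 : (2 <= hw)%N := HW _ wW.
have [i ei] : exists i, hw = i.+1 by exists hw.-1; lia.
subst hw; have i0 : (0 < i)%N by lia.
have [a [b [ep sa]]] := decomp' Tw.
subst p jw.
set ph := phi (size a).
exists (a ++ blk i ++ b, ph @` Sc, ph @` R, ph @` (W `\ (size a, i.+1))).
split; last first.
  by exists a, b, i; split.
have nW : forall u, u \in W `\ (size a, i.+1) -> u \in W /\ u <> (size a, i.+1).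
  by move=> u /fsetD1P[/eqP ne uW].
split; split.
- exact: (elev_corr i0 Tw n).1.
- by move=> t' /imfsetP[t tS ->]; apply/(colored_phi i0 Tw (hS t tS)); exact: CS.
- by rewrite img_card // => x y hx hy; apply: (phi_inj i0 Tw hS hx hy).
- exact: img_sub.
- by rewrite img_card // => x y hx hy; apply: (phi_inj i0 Tw hR hx hy).
- apply: img_sub; apply: fsubset_trans WR; exact: fsubsetDl.
- have hWD : {in W `\ (size a, i.+1), forall t, tower (a ++ blk i.+1 ++ b) t}.
    by move=> u /nW[uW _]; apply hW.
  rewrite img_card; last by move=> x y hx hy; apply: (phi_inj i0 Tw hWD hx hy).
  by move: cW; rewrite (cardfsD1 (size a, i.+1)) wW; lia.
- move=> t' /imfsetP[t /nW[tW ne] ->].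
  by rewrite /height_ge2 (phi_ht Tw (hW t tW) ne); apply: HW.
- move=> w' /imfsetP[u /nW[uW une] ->] z' /imfsetP[z zR ->] zn.
  apply: (phi_mono i0 Tw (hW u uW) (hR z zR)).
  have zn' : z \notin W `\ (size a, i.+1).
    by apply/negP => h; move: zn; rewrite img_mem.
  case: (eqVneq z (size a, i.+1)) => [-> /=|zne].
    have := wmax u uW; rewrite leq_eqVlt => /orP[/eqP e|//].
    by case: une; apply: same_start (hW u uW) Tw _.
  apply: OW => //; apply/negP => zW; move: zn'; rewrite in_fsetD1 zne zW.
  by [].
Qed.

Lemma step_bwd n m r k y : (k < r)%N -> Y n m r k y -> exists x, Y n.+1 m r k.+1 x /\ Rel x y.
Proof.
move=> kr.
case: y => [[[q Sq] R'] W'] [[Eq CS cS RS cR] [WR cW HW OW]].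
have hS : {in Sq, forall t, tower q t} by move=> t h; exact: (CS t h).1.
have hR : {in R', forall t, tower q t} by move=> t h; apply hS; exact: (fsubsetP RS).
have hW : {in W', forall t, tower q t} by move=> t h; apply hR; exact: (fsubsetP WR).
have Dne : R' `\` W' != fset0.
  have : ~~ (R' `<=` W').
    by apply/negP => sub; have := fsubset_leq_card sub; rewrite cR cW; lia.
  case/fsubsetPn => x xR xW; apply/fset0Pn; exists x; rewrite in_fsetD xW xR.
  by [].
have [x0 x0D x0min] := fset_min Dne.
move: x0D; rewrite in_fsetD => /andP[x0W x0R].
case: x0 x0W x0R x0min => jx i x0W x0R x0min.
have Tx := hR _ x0R.
have i0 : (0 < i)%N := tower_pos Tx.
have [a [b [eq sa]]] := decomp' Tx.
subst q jx.
have Tp : tower (a ++ blk i.+1 ++ b) (size a, i.+1) by rewrite mid_tower.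
set ps := psi (size a).
set w0 := (size a, i.+1).
have ew0 : ps (size a, i) = w0 by rewrite /ps psi_eq.
have w0n : w0 \notin ps @` W'.
  apply/negP => /imfsetP[u uW eu].
  have e2 := (corr_q i0 Tp (hW u uW)).2.
  move: e2; rewrite -/ps -eu /w0 phi_eq /= => e2.
  by move: x0W; rewrite e2 uW.
exists (a ++ blk i.+1 ++ b, ps @` Sq, ps @` R', w0 |` ps @` W').
have inW : forall t, t \in w0 |` ps @` W' -> t = w0 \/ exists2 u, u \in W' & t = ps u.
  move=> t; rewrite in_fset1U => /orP[/eqP ->|/imfsetP[u uW ->]]; [by left | by right; exists u].
split.
  split; split.
  - exact: (elev_corr i0 Tp n).2.
  - by move=> t /imfsetP[t' tS ->]; apply/(colored_psi i0 Tp (hS t' tS)); exact: CS.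
  - by rewrite img_card // => x y hx hy; apply: (psi_inj i0 Tp hS hx hy).
  - exact: img_sub.
  - by rewrite img_card // => x y hx hy; apply: (psi_inj i0 Tp hR hx hy).
  - rewrite fsubUset fsub1set; apply/andP; split; last exact: img_sub.
    by rewrite -ew0; apply: img_mem.
  - rewrite cardfsU1 w0n img_card //; first by rewrite cW.
    by move=> x y hx hy; apply: (psi_inj i0 Tp hW hx hy).
  - move=> t /inW[->|[u uW ->]]; first by rewrite /height_ge2 /w0 /=; lia.
    by apply: leq_trans (HW u uW) (psi_ht _ _).
  - move=> w /inW wc z /imfsetP[z' zR ->] zn.
    have z'W : z' \notin W' by apply/negP => h; move: zn; rewrite in_fset1U img_mem ?orbT.
    have z'ne : z' <> (size a, i).
      by move=> e; move: zn; rewrite e ew0 fset1U1.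
    have lt : (size a < z'.1)%N.
      have := x0min z'; rewrite in_fsetD z'W zR => /(_ isT); rewrite leq_eqVlt.
      case/orP => [/eqP e|//]; case: z'ne; apply: same_start (hR _ zR) Tx _.
      by rewrite -e.
    case: wc => [->|[u uW ->]].
      by rewrite -ew0; apply: psi_mono.
    by apply: psi_mono; apply: OW.
exists a, b, i; split; split => //.
- exact: fset1U1.
- move=> u /inW[->//|[v vW ->]].
  have := OW v vW (size a, i) x0R x0W => /= lt.
  by rewrite /ps psi_lt //; apply: ltnW.
- by rewrite (phipsi i0 Tp hS).
- by rewrite (phipsi i0 Tp hR).
- by rewrite fsetU1K // (phipsi i0 Tp hW).
Qed.

Lemma cat_eqr (a c1 c2 : word) : a ++ c1 = a ++ c2 -> c1 = c2.
Proof. by move=> e; rewrite -(drop_a a c1) e drop_a. Qed.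

Lemma split_eq (a1 a2 b1 b2 : word) h : size a1 = size a2 ->
  a1 ++ blk h ++ b1 = a2 ++ blk h ++ b2 -> a1 = a2 /\ b1 = b2.
Proof.
move=> es e.
have ea : a1 = a2 by rewrite -(take_a a1 (blk h ++ b1)) e es take_a.
subst a2; split => //; move/cat_eqr: e; exact: cat_eqr.
Qed.

Lemma step_fun n m r k x y1 y2 : Y n.+1 m r k.+1 x -> Rel x y1 -> Rel x y2 -> y1 = y2.
Proof.
case: x => [[[p Sc] R] W] [[Ep CS cS RS cR] [WR cW HW OW]].
have hS : {in Sc, forall t, tower p t} by move=> t h; exact: (CS t h).1.
have hR : {in R, forall t, tower p t} by move=> t h; apply hS; exact: (fsubsetP RS).
have hW : {in W, forall t, tower p t} by move=> t h; apply hR; exact: (fsubsetP WR).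
case: y1 => [[[q1 S1] R1] W1]; case: y2 => [[[q2 S2] R2] W2].
move=> [a1 [b1 [i1 [[i10 ep1 eq1 w1W w1max] [e1S e1R e1W]]]]].
move=> [a2 [b2 [i2 [[i20 ep2 eq2 w2W w2max] [e2S e2R e2W]]]]].
have ej : size a1 = size a2.
  by apply/eqP; rewrite eqn_leq (w1max _ w2W) (w2max _ w1W).
have ei : i1 = i2.
  have := same_start (hW _ w1W) (hW _ w2W) ej; case; done.
subst i2.
have [ea eb] := split_eq ej (etrans (esym ep1) ep2).
subst a2 b2 q1 q2 S1 S2 R1 R2 W1 W2.
by [].
Qed.

Lemma rel_key n m r k p Sc R W q Sq R' W' a b i :
  Y n.+1 m r k.+1 (p, Sc, R, W) ->
  [/\ (0 < i)%N, p = a ++ blk i.+1 ++ b, q = a ++ blk i ++ b,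
     (size a, i.+1) \in W & {in W, forall u, (u.1 <= size a)%N}] ->
  [/\ Sq = phi (size a) @` Sc, R' = phi (size a) @` R & W' = phi (size a) @` (W `\ (size a, i.+1))] ->
  (size a, i) \in R' `\` W' /\ {in R' `\` W', forall z, (size a <= z.1)%N}.
Proof.
move=> [[Ep CS cS RS cR] [WR cW HW OW]] [i0 ep eq wW wmax] [eS eR eW].
subst p Sq R' W'.
have hS : {in Sc, forall t, tower (a ++ blk i.+1 ++ b) t} by move=> t h; exact: (CS t h).1.
have hR : {in R, forall t, tower (a ++ blk i.+1 ++ b) t} by move=> t h; apply hS; exact: (fsubsetP RS).
have hW : {in W, forall t, tower (a ++ blk i.+1 ++ b) t} by move=> t h; apply hR; exact: (fsubsetP WR).
have Tp := hW _ wW.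
have wR : (size a, i.+1) \in R by exact: (fsubsetP WR).
have ew : phi (size a) (size a, i.+1) = (size a, i) by rewrite phi_eq.
split.
  rewrite in_fsetD -ew (img_mem _ wR) andbT; apply/negP => /imfsetP[u /fsetD1P[une uW] eu].
  by move/eqP: une; apply; apply: (phi_inj i0 Tp hR (fsubsetP WR _ uW) wR); rewrite -eu.
move=> z; rewrite in_fsetD => /andP[zn /imfsetP[z0 z0R ez]]; subst z.
have z0n : z0 \notin W `\ (size a, i.+1).
  by apply/negP => h; move: zn; rewrite (img_mem _ h).
case: (eqVneq z0 (size a, i.+1)) => [->|zne]; first by rewrite ew.
rewrite -{1}[size a]/((size a, i).1) -ew; apply: ltnW.
apply: (phi_mono i0 Tp Tp (hR _ z0R)); apply: OW => //.
by apply/negP => zW; move: z0n; rewrite in_fsetD1 zne zW.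
Qed.

Lemma step_inj n m r k x1 x2 y : Y n.+1 m r k.+1 x1 -> Y n.+1 m r k.+1 x2 -> Y n m r k y ->
  Rel x1 y -> Rel x2 y -> x1 = x2.
Proof.
move=> Y1 Y2; case: y => [[[q Sq] R'] W'] Yy.
have [[Eq CS cS RS cR] [WR cW HW OW]] := Yy.
have hR : {in R', forall t, tower q t}.
  by move=> t h; exact: (CS t (fsubsetP RS _ h)).1.
case: x1 Y1 => [[[p1 S1] R1] W1] Y1; case: x2 Y2 => [[[p2 S2] R2] W2] Y2.
move=> [a1 [b1 [i1 [H1 E1]]]] [a2 [b2 [i2 [H2 E2]]]].
have [k1 m1] := rel_key Y1 H1 E1.
have [k2 m2] := rel_key Y2 H2 E2.
have ej : size a1 = size a2 by apply/eqP; rewrite eqn_leq (m1 _ k2) (m2 _ k1).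
have ei : i1 = i2.
  move: k1 k2; rewrite !in_fsetD => /andP[_ k1] /andP[_ k2].
  by have := same_start (hR _ k1) (hR _ k2) ej; case.
subst i2.
case: H1 => [i0 ep1 eq1 w1W w1max]; case: H2 => [_ ep2 eq2 w2W w2max].
have [ea eb] := split_eq ej (etrans (esym eq1) eq2).
subst a2 b2 p1 p2.
case: E1 => [e1S e1R e1W]; case: E2 => [e2S e2R e2W].
have [[_ CS1 _ RS1 _] [WR1 _ _ _]] := Y1.
have [[_ CS2 _ RS2 _] [WR2 _ _ _]] := Y2.
set p := a1 ++ blk i1.+1 ++ b1.
have Tp : tower p (size a1, i1.+1).
  have := CS1 _ (fsubsetP RS1 _ (fsubsetP WR1 _ w1W)); by case.
have hS1 : {in S1, forall t, tower p t} by move=> t h; exact: (CS1 t h).1.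
have hS2 : {in S2, forall t, tower p t} by move=> t h; exact: (CS2 t h).1.
have hR1 : {in R1, forall t, tower p t} by move=> t h; apply hS1; exact: (fsubsetP RS1).
have hR2 : {in R2, forall t, tower p t} by move=> t h; apply hS2; exact: (fsubsetP RS2).
have hW1 : {in W1 `\ (size a1, i1.+1), forall t, tower p t}.
  by move=> t /fsetD1P[_ h]; apply hR1; exact: (fsubsetP WR1).
have hW2 : {in W2 `\ (size a1, i1.+1), forall t, tower p t}.
  by move=> t /fsetD1P[_ h]; apply hR2; exact: (fsubsetP WR2).
have eS : S1 = S2.
  by rewrite -(psiphi i0 Tp hS1) -(psiphi i0 Tp hS2) -e1S -e2S.
have eR : R1 = R2.
  by rewrite -(psiphi i0 Tp hR1) -(psiphi i0 Tp hR2) -e1R -e2R.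
have eW : W1 = W2.
  rewrite -(fsetD1K w1W) -(fsetD1K w2W).
  by rewrite -(psiphi i0 Tp hW1) -(psiphi i0 Tp hW2) -e1W -e2W.
by rewrite eS eR eW.
Qed.


Local Open Scope fset_scope.

Lemma step_iso n m r k : (k < r)%N -> iso {x | Y n.+1 m r k.+1 x} {y | Y n m r k y}.
Proof.
move=> kr; apply: (@sig_rel_iso _ _ _ _ Rel).
- by move=> x Yx; exact: (step_fwd Yx).
- by move=> y Yy; exact: (step_bwd kr Yy).
- by move=> x y1 y2 Yx _ _ r1 r2; exact: (step_fun Yx r1 r2).
- by move=> x1 x2 y Y1 Y2 Yy r1 r2; exact: (step_inj Y1 Y2 Yy r1 r2).
Qed.

Lemma chain m r d k n : (d + k <= r)%N -> iso {x | Y (n + k) m r (d + k) x} {y | Y n m r d y}.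
Proof.
elim: k => [|k IH] h; first by rewrite !addn0; apply: iso_refl.
rewrite !addnS; apply: iso_trans (step_iso _ _ _) (IH _); lia.
Qed.

Lemma Y_empty m r d x : Y 0 m r d.+1 x -> False.
Proof.
case: x => [[[p Sc] R] W] [[Ep CS cS RS cR] [WR cW HW OW]].
have : W != fset0 by apply/eqP => e; move: cW; rewrite e cardfs0.
case/fset0Pn => w wW.
have := (CS w (fsubsetP RS _ (fsubsetP WR _ wW))).1.
have := HW w wW; case: w wW => j h wW /= h2 /towerE[_ hs _ _].
move: Ep => /elevatedE[sp _ _]; move: hs h2; rewrite sp /height_ge2 /=; lia.
Qed.

Lemma TsBw_Y n m r : iso {x | TsBw n m r x} {y | Y n m r r y}.
Proof.
apply: (@sig_rel_iso _ _ _ _ (fun x (y : quad) => let: (p, Sc, R) := x in y = (p, Sc, R, R))).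
- case=> [[p Sc] R] [Ep CS cS RS [HR cR]]; exists (p, Sc, R, R); split => //.
  split; split => //.
  by move=> w wR z zR; rewrite zR.
- case=> [[[p Sc] R] W] [[Ep CS cS RS cR] [WR cW HW OW]].
  have eW : W = R.
    apply/eqP; rewrite eqEfcard WR /= cR cW; done.
  subst W; exists (p, Sc, R); split => //.
- by case=> [[p Sc] R] y1 y2 _ _ _ -> ->.
- by case=> [[p1 S1] R1] [[p2 S2] R2] y _ _ _ -> [-> -> ->].
Qed.

Lemma Y_TsTw n m r : iso {y | Y n m r 0 y} {x | TsTw (Posz n) m r x}.
Proof.
apply: (@sig_rel_iso _ _ _ _ (fun (y : quad) x => let: (p, Sc, R, W) := y in x = (p, Sc, R))).
- case=> [[[p Sc] R] W] [[Ep CS cS RS cR] [WR cW HW OW]]; exists (p, Sc, R); split => //.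
  by split => //; exists n.
- case=> [[p Sc] R] [[n' [en Ep]] CS cS RS cR]; case: en => en; subst n'.
  by exists (p, Sc, R, fset0); split => //; split; split => //.
- by case=> [[[p Sc] R] W] y1 y2 _ _ _ -> ->.
- move=> [[[p1 S1] R1] W1] [[[p2 S2] R2] W2] y [[_ _ _ _ _] [_ c1 _ _]] [[_ _ _ _ _] [_ c2 _ _]] _ -> [-> -> ->].
  by rewrite (cardfs0_eq c1) (cardfs0_eq c2).
Qed.

Theorem lemma2p2 (n m r : nat) :
  exists f : {x : triple | TsBw n m r x} ->
             {x : triple | TsTw (Posz n - Posz r)%R m r x},
    bijective f.
Proof.
change (iso {x : triple | TsBw n m r x} {x : triple | TsTw (Posz n - Posz r)%R m r x}).
case: (leqP r n) => h.
- have eZ : (Posz n - Posz r)%R = Posz (n - r) by rewrite subzn.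
  rewrite eZ; apply: iso_trans (TsBw_Y n m r) _.
  have := @chain m r 0 r (n - r) ltac:(lia).
  rewrite add0n subnK //; move=> c; apply: iso_trans c (Y_TsTw _ _ _).
- have [f _] := TsBw_Y n m r.
  have := @chain m r (r - n) n 0 ltac:(lia).
  rewrite add0n subnK; last by lia.
  case=> g _.
  apply: iso_empty.
    move=> x; case: (g (f x)) => y; case: (r - n) (ltac:(lia) : (0 < r - n)%N) => // d _.
    exact: Y_empty.
  case=> [[[p Sc] R]] [[n' [en _]] _ _ _ _].
  move: en; lia.
Qed.
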